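(* Let $d\ge3$, $\beta>0$, $g:\mathbb{R}^d\to\mathbb{R}$ Lipschitz. There are positive constants $C_1,C_2,C_3,C_4$ depending only on $d,\beta,g$ such that for any $\varepsilon>0$, $t\in\mathbb{Z}_{\ge0}$, $x\in\mathbb{Z}^d$, \[ C_1e^{-C_2\varepsilon(|x|+\sqrt t)}\le G_\varepsilon(t,x)\le C_3e^{C_4(\varepsilon|x|+\varepsilon^2t)}. \]
   Context: $\{S_n\}_{n\ge0}$ is simple symmetric random walk on $\mathbb{Z}^d$ started at the origin; $g_\varepsilon(x)=g(\varepsilon x)$ and $G_\varepsilon(t,x)=\mathbb{E}(e^{\beta g_\varepsilon(S_t+x)})$ for $t\in\mathbb{Z}_{\ge0}$, $x\in\mathbb{Z}^d$. *)

(* Defs.v *)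
From HB Require Import structures.
From mathcomp Require Import all_boot all_order all_algebra.
From mathcomp Require Import all_classical all_reals all_analysis.
Set Implicit Arguments. Unset Strict Implicit. Unset Printing Implicit Defensive.
Import Order.TTheory GRing.Theory Num.Theory.
Local Open Scope ring_scope.

Definition enorm (R : realType) (d : nat) (v : 'I_d -> R) : R :=
  Num.sqrt (\sum_(i < d) v i ^+ 2).

Definition intvec (R : realType) (d : nat) (x : 'I_d -> int) : 'I_d -> R :=
  fun i => (x i)%:~R.

Definition lipschitz_eucl (R : realType) (d : nat) (g : ('I_d -> R) -> R) : Prop :=
  exists L : R, forall u v : 'I_d -> R, `|g u - g v| <= L * enorm (fun i => u i - v i).

(* A step of simple symmetric random walk on Z^d: a coordinate direction and
   a sign (true = +e_i, false = -e_i); there are 2d steps, each equally likely. *)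
Definition step_int (d : nat) (s : 'I_d * bool) : 'I_d -> int :=
  fun i => if i == s.1 then (if s.2 then 1 else -1) else 0.

Definition walk_pos (d t : nat) (w : {ffun 'I_t -> 'I_d * bool}) : 'I_d -> int :=
  fun i => \sum_(k < t) step_int (w k) i.

(* G_eps(t,x) = E[ exp(beta g(eps (S_t + x))) ], S_t simple symmetric random walk
   from 0: the law of (S_1..S_t) is uniform over the (2d)^t step sequences. *)
Definition Geps (R : realType) (d : nat) (beta : R) (g : ('I_d -> R) -> R)
    (eps : R) (t : nat) (x : 'I_d -> int) : R :=
  \sum_(w : {ffun 'I_t -> 'I_d * bool})
    ((2 * d)%:R ^- t) *
    expR (beta * g (fun i => eps * (intvec R (fun j => walk_pos w j + x j) i))).

(* Main.v *)
Require Import Defs.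
From HB Require Import structures.
From mathcomp Require Import all_boot all_order all_algebra.
From mathcomp Require Import all_classical all_reals all_analysis.
From mathcomp Require Import ring lra.
Import Order.TTheory GRing.Theory Num.Theory.
Local Open Scope ring_scope.
Set Implicit Arguments. Unset Strict Implicit. Unset Printing Implicit Defensive.

Lemma cosh_bound (R : realType) (c : R) : expR c + expR (-c) <= 2 * expR (2 * c^+2).
Proof.
have hA := expR_ge1Dx c. have hB := expR_ge1Dx (-c).
have hAB : expR c * expR (-c) = 1 by rewrite -expRD subrr expR0.
have hE := expR_ge1Dx (2 * c^+2).
have hA0 := expR_gt0 c. have hB0 := expR_gt0 (-c).
case: (lerP (c^+2) (1/2)) => hc.
- have h1 : (expR c + expR (-c)) * (1 - c^+2) <= 2.
    have : expR c * (1 - c) <= expR c * expR (-c) by apply: ler_wpM2l; lra.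
    have : expR (-c) * (1 + c) <= expR (-c) * expR c by apply: ler_wpM2l; lra.
    have hc1 : -1 <= c <= 1 by apply/andP; split; nra.
    nra.
  have h2 : 1 <= expR (2 * c^+2) * (1 - c^+2) by nra.
  have hp : 0 < 1 - c^+2 by lra.
  rewrite -(ler_pM2r hp). nra.
- have e1 : expR c <= expR (2 * c^+2) by rewrite ler_expR; nra.
  have e2 : expR (-c) <= expR (2 * c^+2) by rewrite ler_expR; nra.
  lra.
Qed.

Lemma jensen (R : realType) (I : finType) (p f : I -> R) :
  (forall i, 0 <= p i) -> \sum_i p i = 1 ->
  expR (\sum_i p i * f i) <= \sum_i p i * expR (f i).
Proof.
move=> hp h1; set m := \sum_i p i * f i.
have H i : p i * (expR m * (1 + (f i - m))) <= p i * expR (f i).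
  apply: ler_wpM2l => //.
  have -> : expR (f i) = expR m * expR (f i - m) by rewrite -expRD addrC subrK.
  by rewrite ler_wpM2l ?expR_ge1Dx // ltW // expR_gt0.
apply: le_trans (ler_sum _ (fun i _ => H i)).
under eq_bigr do rewrite mulrCA mulrDr mulr1 mulrBr.
rewrite -mulr_sumr big_split /= sumrB h1 -/m -mulr_suml h1 mul1r.
by rewrite subrr addr0 mulr1.
Qed.

Lemma sq_le_sum (R : realType) (d : nat) (v : 'I_d -> R) :
  enorm v <= \sum_i `|v i|.
Proof.
rewrite /enorm; set S := \sum_i `|v i|.
have S0 : 0 <= S by apply: sumr_ge0 => i _.
rewrite -(ger0_norm S0) -sqrtr_sqr ler_sqrt ?sqr_ge0 //.
have H i : v i ^+ 2 <= `|v i| * S.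
  rewrite -real_normK ?num_real // expr2 ler_wpM2l //.
  by rewrite /S (bigD1 i) //= lerDl; apply: sumr_ge0.
apply: le_trans (ler_sum _ (fun i _ => H i)) _.
by rewrite -mulr_suml expr2.
Qed.

Definition sg (R : realType) (b : bool) : R := if b then 1 else -1.
Definition psi (R : realType) (d : nat) (a : R) (s : {ffun 'I_d -> bool})
  (st : 'I_d * bool) : R := \sum_i a * sg R (s i) * (step_int st i)%:~R.

Lemma psi_val (R : realType) (d : nat) (a : R) (s : {ffun 'I_d -> bool}) i b :
  psi a s (i, b) = a * sg R (s i) * sg R b.
Proof.
rewrite /psi (bigD1 i) //= big1 ?addr0.
  by rewrite /step_int eqxx; case: b.
by move=> j hj; rewrite /step_int /= (negbTE hj) mulr0.
Qed.

Lemma sum_psi (R : realType) (d : nat) (a : R) (s : {ffun 'I_d -> bool}) :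
  \sum_st expR (psi a s st) <= (2 * d)%:R * expR (2 * a ^+ 2).
Proof.
have -> : \sum_st expR (psi a s st) = \sum_i \sum_b expR (psi a s (i, b)).
  by rewrite pair_bigA; apply: eq_bigr => -[i b].
have H i : \sum_b expR (psi a s (i, b)) <= 2 * expR (2 * a ^+ 2).
  rewrite big_bool !psi_val /sg /=.
  have := cosh_bound (a * sg R (s i)).
  by rewrite /sg; case: (s i); rewrite ?mulr1 ?mulrN1 ?sqrrN.
apply: le_trans (ler_sum _ (fun i _ => H i)) _.
rewrite sumr_const card_ord -mulr_natr (natrM R 2 d); rewrite le_eqVlt; apply/orP; left; apply/eqP; ring.
Qed.

Lemma eqle (R : realType) (x y : R) : x = y -> x <= y.
Proof. by move->. Qed.

Lemma walk_bound (R : realType) (d t : nat) (a : R) (w : {ffun 'I_t -> 'I_d * bool}) :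
  0 <= a ->
  expR (a * enorm (intvec R (walk_pos w))) <=
  \sum_(s : {ffun 'I_d -> bool}) \prod_(k < t) expR (psi a s (w k)).
Proof.
move=> a0; set v := intvec R (walk_pos w).
apply: (@le_trans _ _ (expR (\sum_i a * `|v i|))).
  by rewrite ler_expR -mulr_sumr ler_wpM2l // sq_le_sum.
rewrite expR_sum.
apply: (@le_trans _ _ (\prod_i \sum_(b : bool) expR (a * sg R b * v i))).
  apply: ler_prod => i _; rewrite ltW ?expR_gt0 //= big_bool /= /sg mulr1 mulrN1.
  case: (lerP 0 (v i)) => h; [rewrite ger0_norm // | rewrite ltr0_norm //].
    by rewrite lerDl ltW // expR_gt0.
  by rewrite mulNr mulrN lerDr ltW // expR_gt0.
rewrite bigA_distr_bigA /=; apply: ler_sum => s _; apply: eqle.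
rewrite -!expR_sum; congr expR.
rewrite /v /intvec /walk_pos.
under eq_bigr do rewrite mulrz_sumr mulr_sumr.
by rewrite exchange_big.
Qed.

Lemma lemA (R : realType) (d t : nat) (a : R) : (0 < d)%N -> 0 <= a ->
  \sum_(w : {ffun 'I_t -> 'I_d * bool})
    ((2 * d)%:R ^- t * expR (a * enorm (intvec R (walk_pos w))))
  <= 2 ^+ d * expR (2 * a ^+ 2 * t%:R).
Proof.
move=> d0 a0; rewrite -mulr_sumr.
have p0 : 0 <= ((2 * d)%:R ^- t : R) by rewrite invr_ge0 exprn_ge0 // ler0n.
apply: (@le_trans _ _ ((2 * d)%:R ^- t *
   \sum_(w : {ffun 'I_t -> 'I_d * bool}) \sum_(s : {ffun 'I_d -> bool})
      \prod_(k < t) expR (psi a s (w k)))).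
  by apply: ler_wpM2l => //; apply: ler_sum => w _; exact: walk_bound.
rewrite exchange_big /=.
under eq_bigr => s _ do rewrite -(bigA_distr_bigA (fun (k : 'I_t) st => expR (psi a s st))) prodr_const card_ord.
apply: (@le_trans _ _ ((2 * d)%:R ^- t * \sum_(s : {ffun 'I_d -> bool})
   ((2 * d)%:R * expR (2 * a ^+ 2)) ^+ t)).
  apply: ler_wpM2l => //; apply: ler_sum => s _; apply: lerXn2r.
  - by rewrite nnegrE; apply: sumr_ge0 => i _; rewrite ltW // expR_gt0.
  - by rewrite nnegrE mulr_ge0 // ltW // expR_gt0.
  - exact: sum_psi.
rewrite sumr_const card_ffun card_bool card_ord exprMn -expRM_natr.
have q0 : ((2 * d)%:R ^+ t : R) != 0.
  by rewrite expf_neq0 // pnatr_eq0 -lt0n muln_gt0 d0.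
apply: eqle; rewrite -[_ *+ (2 ^ d)%N]mulr_natr natrX.
move: q0; set q := ((2 * d)%:R ^+ t : R) => q0.
by field.
Qed.

Lemma psum (R : realType) (d t : nat) : (0 < d)%N ->
  \sum_(w : {ffun 'I_t -> 'I_d * bool}) ((2 * d)%:R ^- t : R) = 1.
Proof.
move=> d0; rewrite sumr_const card_ffun card_prod card_bool !card_ord.
rewrite -[_ *+ _]mulr_natr natrX mulnC mulVf //.
by rewrite expf_neq0 // pnatr_eq0 -lt0n muln_gt0 d0.
Qed.

Lemma enorm_walk0 (R : realType) (d : nat) (w : {ffun 'I_0 -> 'I_d * bool}) :
  enorm (intvec R (walk_pos w)) = 0.
Proof.
rewrite /enorm big1 ?sqrtr0 // => i _.
by rewrite /intvec /walk_pos big_ord0 expr2 mulr0.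
Qed.

Lemma two_le_e (R : realType) : (2 : R) <= expR 1.
Proof. have := expR_ge1Dx (1 : R); lra. Qed.

Lemma lemC (R : realType) (d t : nat) : (0 < d)%N ->
  \sum_(w : {ffun 'I_t -> 'I_d * bool})
    ((2 * d)%:R ^- t * enorm (intvec R (walk_pos w)))
  <= (d + 2)%:R * Num.sqrt t%:R.
Proof.
move=> d0; case: t => [|t].
  rewrite big1 ?mulr_ge0 ?sqrtr_ge0 // => w _.
  by rewrite enorm_walk0 mulr0.
set T := t.+1.
have s0 : 0 < Num.sqrt (T%:R : R) by rewrite sqrtr_gt0 ltr0n.
set s := Num.sqrt (T%:R : R).
set lam := s^-1.
have l0 : 0 < lam by rewrite invr_gt0.
set X := \sum_w _.
have J := jensen (p := fun _ : {ffun 'I_T -> 'I_d * bool} => ((2 * d)%:R ^- T : R))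
  (fun w => lam * enorm (intvec R (walk_pos w))).
have := J (fun _ => ltac:(by rewrite invr_ge0 exprn_ge0 // ler0n)) (psum R T d0).
have A := lemA T d0 (ltW l0).
have E1 : 2 * lam ^+ 2 * T%:R = 2.
  rewrite /lam exprVn sqr_sqrtr ?ler0n // -mulrA mulVf ?mulr1 //.
  by rewrite pnatr_eq0.
rewrite E1 in A.
have E2 : (2 : R) ^+ d * expR 2 <= expR ((d + 2)%:R).
  rewrite (natrD R d 2) (expRD (d%:R)) -[d%:R]mulr1 expRM_natl.
  apply: ler_wpM2r; first by rewrite ltW // expR_gt0.
  apply: (lerXn2r d); rewrite ?nnegrE //.
  all: try by rewrite ltW // expR_gt0.
  exact: two_le_e.
move=> J1.
have J2 : expR (lam * X) <= expR ((d + 2)%:R).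
  apply: le_trans E2; apply: le_trans A; apply: le_trans J1; apply: eqle.
  congr expR; rewrite /X mulr_sumr; apply: eq_bigr => w _; by rewrite mulrCA.
rewrite ler_expR in J2.
have -> : X = s * (lam * X) by rewrite mulrA mulrV ?mul1r // unitfE gt_eqF.
by rewrite mulrC ler_wpM2r // ltW.
Qed.

Lemma enorm_scale (R : realType) (d : nat) (c : R) (v : 'I_d -> R) :
  enorm (fun i => c * v i) = `|c| * enorm v.
Proof.
rewrite /enorm -sqrtr_sqr -sqrtrM ?sqr_ge0 // mulr_sumr.
by congr Num.sqrt; apply: eq_bigr => i _; rewrite exprMn.
Qed.

Lemma key (R : realType) (d t : nat) (g : ('I_d -> R) -> R) (K beta eps : R)
  (x : 'I_d -> int) (w : {ffun 'I_t -> 'I_d * bool}) :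
  0 < beta -> 0 < eps ->
  (forall u v, `|g u - g v| <= K * enorm (fun i => u i - v i)) ->
  `|beta * g (fun i => eps * intvec R (fun j => walk_pos w j + x j) i)
    - beta * g (fun _ => 0)|
  <= beta * K * eps * (enorm (intvec R (walk_pos w)) + enorm (intvec R x)).
Proof.
move=> b0 e0 hK.
set Y := (fun i => _).
set Z := (fun i => eps * intvec R x i).
have h1 := hK Y Z. have h2 := hK Z (fun _ => 0).
have e1 : (fun i => Y i - Z i) = (fun i => eps * intvec R (walk_pos w) i).
  apply: funext => i; rewrite /Y /Z /intvec intrD; ring.
have e2 : (fun i => Z i - 0) = (fun i => eps * intvec R x i).
  by apply: funext => i; rewrite subr0.
rewrite e1 in h1; rewrite e2 in h2.
rewrite !enorm_scale (ger0_norm (ltW e0)) in h1 h2.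
rewrite -mulrBr normrM (gtr0_norm b0) -!mulrA; apply: ler_wpM2l; first exact: ltW.
apply: le_trans (ler_distD (g Z) _ _) _.
apply: le_trans (lerD h1 h2) _.
by apply: eqle; ring.
Qed.

Lemma sum_aff (R : realType) (I : finType) (p c a : R) (f : I -> R) :
  \sum_(i : I) p = 1 ->
  \sum_i p * (c - a * f i) = c - a * \sum_i p * f i.
Proof.
move=> h.
have E : forall i, p * (c - a * f i) = p * c - a * (p * f i) by move=> i; ring.
under eq_bigr do rewrite E.
by rewrite sumrB -mulr_suml h mul1r mulr_sumr.
Qed.

Theorem lemma5p4 (R : realType) (d : nat) (beta : R) (g : ('I_d -> R) -> R) :
  (3 <= d)%N -> 0 < beta -> lipschitz_eucl g ->
  exists C1 C2 C3 C4 : R,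
    [/\ 0 < C1, 0 < C2, 0 < C3, 0 < C4 &
      forall (eps : R) (t : nat) (x : 'I_d -> int), 0 < eps ->
        C1 * expR (- (C2 * eps * (enorm (intvec R x) + Num.sqrt t%:R)))
          <= Geps beta g eps t x /\
        Geps beta g eps t x
          <= C3 * expR (C4 * (eps * enorm (intvec R x) + eps ^+ 2 * t%:R))].
Proof.
move=> d3 b0 [L hL].
have d0 : (0 < d)%N by apply: leq_trans d3.
set K := `|L| + 1.
have K0 : 0 < K by rewrite /K ltr_pwDr.
have hK : forall u v, `|g u - g v| <= K * enorm (fun i => u i - v i).
  move=> u v; apply: le_trans (hL u v) _; apply: ler_wpM2r.
    by rewrite /enorm sqrtr_ge0.
  by rewrite /K; apply: le_trans (ler_norm L) _; rewrite lerDl.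
set g0 := g (fun _ => 0).
set B := beta * K.
have B0 : 0 < B by rewrite /B mulr_gt0.
exists (expR (beta * g0)), (B * (d + 2)%:R), (2 ^+ d * expR (beta * g0)),
  (B + 2 * B ^+ 2).
split.
- exact: expR_gt0.
- by rewrite mulr_gt0 // ltr0n addn2.
- by rewrite mulr_gt0 ?expR_gt0 // exprn_gt0.
- by rewrite addr_gt0 // mulr_gt0 // exprn_gt0.
move=> eps t x e0.
set a := B * eps.
have a0 : 0 <= a by rewrite /a ltW // mulr_gt0.
set nx := enorm (intvec R x).
have nx0 : 0 <= nx by rewrite /nx /enorm sqrtr_ge0.
set p := ((2 * d)%:R ^- t : R).
have p0 : 0 <= p by rewrite invr_ge0 exprn_ge0 // ler0n.
have kw := fun w : {ffun 'I_t -> 'I_d * bool} => key x w b0 e0 hK.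
rewrite -/g0 -/B -/a -/nx in kw.
have ps := psum R t d0; rewrite -/p in ps.
have pn0 : forall w : {ffun 'I_t -> 'I_d * bool},
  0 <= enorm (intvec R (walk_pos w)) by move=> w; rewrite /enorm sqrtr_ge0.
split.
- rewrite /Geps -/p.
  apply: (@le_trans _ _ (expR (\sum_w p * (beta * g0 - a * nx
            - a * enorm (intvec R (walk_pos w)))))).
    rewrite sum_aff; last exact: ps.
    apply: le_trans (eqle (esym (expRD _ _))) _; rewrite ler_expR.
    have hM := lemC R t d0; rewrite -/p in hM.
    move: hM; set M := \sum_w _ => hM.
    have hM' : a * M <= a * ((d + 2)%:R * Num.sqrt t%:R) by apply: ler_wpM2l.
    have hd : 1 <= ((d + 2)%:R : R) by rewrite ler1n addn2.
    have hn : a * nx <= a * (d + 2)%:R * nx.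
      by rewrite -mulrA ler_wpM2l // ler_peMl.
    move: hM' hn; rewrite /a => hM' hn.
    nra.
  apply: (@le_trans _ _ (\sum_w p * expR (beta * g0 - a * nx
            - a * enorm (intvec R (walk_pos w))))).
    exact: (@jensen _ _ (fun _ => p) (fun w => beta * g0 - a * nx
            - a * enorm (intvec R (walk_pos w))) (fun _ => p0) ps).
  apply: ler_sum => w _; apply: ler_wpM2l => //; rewrite ler_expR.
  have := kw w; rewrite ler_norml => /andP [h _].
  rewrite mulrDr in h; lra.
- rewrite /Geps -/p.
  apply: (@le_trans _ _ (\sum_w p * (expR (beta * g0 + a * nx) *
            expR (a * enorm (intvec R (walk_pos w)))))).
    apply: ler_sum => w _; apply: ler_wpM2l => //; rewrite -expRD ler_expR.
    have := kw w; rewrite ler_norml => /andP [_ h].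
    rewrite mulrDr in h; lra.
  under eq_bigr do rewrite mulrCA.
  rewrite -mulr_sumr.
  apply: le_trans (ler_wpM2l (ltW (expR_gt0 _)) (lemA t d0 a0)) _.
  apply: le_trans (eqle (_ : _ = 2 ^+ d * expR (beta * g0 + a * nx + 2 * a ^+ 2 * t%:R))) _.
    by rewrite !expRD; ring.
  apply: le_trans _ (eqle (_ : 2 ^+ d * expR (beta * g0 + (B + 2 * B ^+ 2) * (eps * nx + eps ^+ 2 * t%:R)) = _)); last by rewrite expRD; ring.
  apply: ler_wpM2l; first by rewrite exprn_ge0.
  rewrite ler_expR -subr_ge0.
  have -> : beta * g0 + (B + 2 * B ^+ 2) * (eps * nx + eps ^+ 2 * t%:R) -
    (beta * g0 + a * nx + 2 * a ^+ 2 * t%:R) =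
    2 * B ^+ 2 * (eps * nx) + B * (eps ^+ 2 * t%:R) by rewrite /a; ring.
  by rewrite addr_ge0 // !mulr_ge0 // ?ltW // ?exprn_ge0 // ?ltW.
Qed.
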